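(* Let $U:\mathbb{R}^d\to\mathbb{R}$ be twice continuously differentiable with $\nabla U(0)=0$ and $\sup_x\|\mathrm{D}^2U(x)\|\le\mathtt{L}$, and assume there exist $\mathtt{m}>0$, $\mathtt{K}\ge0$ with $\mathrm{D}^2U(x)[y,y]\ge\mathtt{m}$ whenever $\|x\|\ge\mathtt{K}$, $\|y\|=1$. Then for all $x,y\in\mathbb{R}^d$ with $\|x\|\vee\|y\|\ge\mathtt{K}+8\mathtt{K}\mathtt{L}/\mathtt{m}$, $$\langle\nabla U(x)-\nabla U(y),x-y\rangle\ge(\mathtt{m}/2)\|x-y\|^2.$$ *)

(* Defs.v *)
(* R^d is represented by row vectors 'rV[R]_d. *)
From mathcomp Require Import all_boot all_order all_algebra.
From mathcomp Require Import all_classical all_reals all_analysis.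
Set Implicit Arguments. Unset Strict Implicit. Unset Printing Implicit Defensive.
Import Order.TTheory GRing.Theory Num.Theory.
Import numFieldNormedType.Exports.
Local Open Scope ring_scope.

Section Defs.
Variables (R : realType) (d : nat).

Definition dotv (x y : 'rV[R]_d) : R := \sum_(i < d) x ord0 i * y ord0 i.
Definition enorm (x : 'rV[R]_d) : R := Num.sqrt (dotv x x).

Definition evec (i : 'I_d) : 'rV[R]_d := delta_mx ord0 i.

Definition grad (U : 'rV[R]_d -> R) (x : 'rV[R]_d) : 'rV[R]_d :=
  \row_i derive U x (evec i).

(* second derivative as a bilinear form: D^2 U(x)[y,z] = D_z (D_y U)(x) *)
Definition hess (U : 'rV[R]_d -> R) (x y z : 'rV[R]_d) : R :=
  derive (fun w => derive U w y) x z.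

(* twice continuously differentiable: U is differentiable, every directional
   derivative w |-> D_y U(w) is differentiable, and every second directional
   derivative w |-> D^2 U(w)[y,z] is continuous (equivalent to C^2 on R^d). *)
Definition C2 (U : 'rV[R]_d -> R) : Prop :=
  (forall x, differentiable U x) /\
  (forall y x, differentiable (fun w => derive U w y) x) /\
  (forall y z, continuous (fun w => hess U w y z)).

End Defs.

(* Main.v *)
Require Import Defs.
From mathcomp Require Import all_boot all_order all_algebra.
From mathcomp Require Import all_classical all_reals all_analysis.
From mathcomp Require Import ring lra.
Import Order.TTheory GRing.Theory Num.Theory.
Import numFieldNormedType.Exports.
Local Open Scope ring_scope.
Set Implicit Arguments. Unset Strict Implicit.

Section H.
Variables (R : realType) (d : nat).
Implicit Types (x y z a b : 'rV[R]_d).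

Lemma dotvC x y : dotv x y = dotv y x.
Proof. by apply: eq_bigr => i _; rewrite mulrC. Qed.

Lemma dotvDl x y z : dotv (x + y) z = dotv x z + dotv y z.
Proof. by rewrite /dotv -big_split; apply: eq_bigr => i _; rewrite !mxE mulrDl. Qed.

Lemma dotvZl (c : R) x y : dotv (c *: x) y = c * dotv x y.
Proof. by rewrite /dotv big_distrr; apply: eq_bigr => i _; rewrite !mxE -mulrA. Qed.

Lemma dotvDr x y z : dotv z (x + y) = dotv z x + dotv z y.
Proof. by rewrite dotvC dotvDl !(dotvC z). Qed.

Lemma dotvZr (c : R) x y : dotv y (c *: x) = c * dotv y x.
Proof. by rewrite dotvC dotvZl dotvC. Qed.

Lemma dotvNl x y : dotv (- x) y = - dotv x y.
Proof. by rewrite -scaleN1r dotvZl mulN1r. Qed.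

Lemma dotvNr x y : dotv y (- x) = - dotv y x.
Proof. by rewrite dotvC dotvNl dotvC. Qed.

Lemma dotv_ge0 x : 0 <= dotv x x.
Proof. by apply: sumr_ge0 => i _; rewrite -expr2 sqr_ge0. Qed.

Lemma enorm_sq x : enorm x ^+ 2 = dotv x x.
Proof. by rewrite /enorm sqr_sqrtr // dotv_ge0. Qed.

Lemma enorm_ge0 x : 0 <= enorm x.
Proof. exact: sqrtr_ge0. Qed.

Lemma quad x y (t : R) : dotv (x + t *: y) (x + t *: y) =
  dotv x x + 2 * t * dotv x y + t ^+ 2 * dotv y y.
Proof.
rewrite !dotvDl !dotvDr !dotvZl !dotvZr (dotvC y x); ring.
Qed.

Lemma CS x y : dotv x y ^+ 2 <= dotv x x * dotv y y.
Proof.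
have q := fun t => dotv_ge0 (x + t *: y); move: q.
move=> /(_ _) q.
have [B0|Bp] := eqVneq (dotv y y) 0.
  rewrite B0 mulr0.
  have [P0|Pn] := eqVneq (dotv x y) 0; first by rewrite P0 expr0n.
  have := q (- (dotv x x + 1) / (2 * dotv x y)); rewrite quad B0 mulr0 addr0.
  have -> : 2 * (- (dotv x x + 1) / (2 * dotv x y)) * dotv x y = - (dotv x x + 1).
    by field; rewrite Pn.
  lra.
have Bg : 0 < dotv y y by rewrite lt_def Bp dotv_ge0.
have := q (- dotv x y / dotv y y); rewrite quad => h.
have : 0 <= (dotv x x + 2 * (- dotv x y / dotv y y) * dotv x y +
    (- dotv x y / dotv y y) ^+ 2 * dotv y y) * dotv y y by rewrite mulr_ge0 // ltW.
have -> : (dotv x x + 2 * (- dotv x y / dotv y y) * dotv x y +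
    (- dotv x y / dotv y y) ^+ 2 * dotv y y) * dotv y y =
    dotv x x * dotv y y - dotv x y ^+ 2 by field; rewrite Bp.
lra.
Qed.

Lemma dotv_le x y : dotv x y <= enorm x * enorm y.
Proof.
have h := CS x y; rewrite -!enorm_sq -exprMn in h.
have : `|dotv x y| <= enorm x * enorm y.
  by rewrite -ler_sqr ?nnegrE ?normr_ge0 ?mulr_ge0 ?enorm_ge0 // real_normK ?num_real.
by apply: le_trans; apply: ler_norm.
Qed.

Lemma enormD x y : enorm (x + y) <= enorm x + enorm y.
Proof.
rewrite -ler_sqr ?nnegrE ?addr_ge0 ?enorm_ge0 //.
rewrite enorm_sq dotvDl !dotvDr -!enorm_sq (dotvC y x).
have := dotv_le x y; nra.
Qed.

Lemma enormZ (c : R) x : enorm (c *: x) = `|c| * enorm x.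
Proof.
by rewrite /enorm dotvZl dotvZr mulrA -expr2 sqrtrM ?sqr_ge0 // sqrtr_sqr.
Qed.

Lemma enormN x : enorm (- x) = enorm x.
Proof. by rewrite -scaleN1r enormZ normrN normr1 mul1r. Qed.

End H.
Section H2.
Variables (R : realType) (d : nat).
Implicit Types (x y z a b : 'rV[R]_d).

Lemma line_derive (F : 'rV[R]_d -> R) y v t : derivable F (y + t*:v) v ->
  is_derive t 1 (fun s => F (y + s *: v)) (derive F (y + t *: v) v).
Proof.
have E : (fun h : R => h^-1 *: (((fun s => F (y + s *: v)) \o shift t) (h *: 1) - F (y + t *: v)))
  = (fun h => h^-1 *: ((F \o shift (y + t *: v)) (h *: v) - F (y + t *: v))).
  apply/funext => h /=; congr (_ *: (F _ - _)).
  by rewrite /shift /= scalerDl [h%:A]mulr1 addrCA.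
move=> dF; split; rewrite /derivable /derive E //.
Qed.

Lemma mono_bound (g dg : R -> R) (c p q : R) : p <= q ->
  (forall t : R, is_derive t (1:R) g (dg t)) ->
  (forall t, p < t < q -> c <= dg t) -> c * (q - p) <= g q - g p.
Proof.
move=> pq dgt hc.
have [<-|pq'] := eqVneq p q; first by rewrite !subrr mulr0.
have lpq : p < q by rewrite lt_def eq_sym pq' pq.
have [|cc cin ->] := MVT lpq (fun t _ => dgt t).
  apply: derivable_within_continuous => t _; exact: ex_derive.
rewrite ler_pM2r ?subr_gt0 //.
move: cin; rewrite in_itv /= => /andP[h1 h2].
by apply: hc; rewrite h1 h2.
Qed.

Lemma deriveZdir (f : 'rV[R]_d -> R) a v (c : R) : differentiable f a ->
  derive f a (c *: v) = c * derive f a v.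
Proof. by move=> df; rewrite !deriveE // linearZ. Qed.

Lemma derive_grad (U : 'rV[R]_d -> R) x v : differentiable U x ->
  derive U x v = dotv (grad U x) v.
Proof.
move=> dU; rewrite deriveE // {1}(row_sum_delta v) linear_sum /dotv.
apply: eq_bigr => i _; rewrite linearZ /= mxE -deriveE //; exact: mulrC.
Qed.

Lemma hess_scale (U : 'rV[R]_d -> R) z u (c : R) : C2 U ->
  hess U z (c *: u) (c *: u) = c ^+ 2 * hess U z u u.
Proof.
move=> [d1 [d2 _]]; rewrite /hess.
have -> : (fun w => derive U w (c *: u)) = c \*: (fun w => derive U w u).
  by apply/funext => w /=; rewrite deriveZdir.
rewrite deriveZ; last exact: diff_derivable.
by rewrite deriveZdir // expr2 [in LHS]/GRing.scale /= mulrA.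
Qed.

End H2.

Lemma three_pieces (R : realType) (G dG : R -> R) (a b c1 c2 : R) :
  (forall t : R, is_derive t (1:R) G (dG t)) ->
  (forall t, 0 < t < 1 -> (t <= a \/ b <= t) -> c1 <= dG t) ->
  (forall t, 0 < t < 1 -> c2 <= dG t) -> c2 <= c1 -> a <= b ->
  c1 - (c1 - c2) * (b - a) <= G 1 - G 0.
Proof.
move=> dGt h1 h2 c12 ab.
have hc : 0 <= (c1 - c2) by lra.
have [b0|b0] := leP b 0.
  have := @mono_bound _ G dG c1 0 1 ler01 dGt (fun t ht => h1 t ht (or_intror (le_trans b0 (ltW (proj1 (andP ht)))))).
  have : 0 <= (c1 - c2) * (b - a) by apply: mulr_ge0; lra.
  lra.
have [a1|a1] := leP 1 a.
  have := @mono_bound _ G dG c1 0 1 ler01 dGt (fun t ht => h1 t ht (or_introl (le_trans (ltW (proj2 (andP ht))) a1))).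
  have : 0 <= (c1 - c2) * (b - a) by apply: mulr_ge0; lra.
  lra.
have [a' [a'01 [aa' a'e]]] : exists a', (0 <= a' <= 1) /\ a <= a' /\ (a' = 0 \/ a' = a).
  have [a0|a0] := leP a 0; first by exists 0; split; [rewrite lexx ler01|split; [|left]].
  by exists a; split; [apply/andP; split; lra|split; [|right]].
have [b' [b'01 [bb' b'e]]] : exists b', (0 <= b' <= 1) /\ b' <= b /\ (b' = 1 \/ b' = b).
  have [b1|b1] := leP b 1; last by exists 1; split; [rewrite lexx ler01|split; [lra|left]].
  by exists b; split; [apply/andP; split; lra|split; [|right]].
move: a'01 b'01 => /andP[a'0 a'1] /andP[b'0 b'1].
have ab' : a' <= b' by case: a'e; case: b'e => -> ->; lra.
have P1 := @mono_bound _ G dG c1 0 a' a'0 dGt (fun t ht => h1 t (ltac:(move: ht => /andP[? ?]; apply/andP; split; lra)) (ltac:(left; move: ht => /andP[? ?]; case: a'e => E; lra))).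
have P2 := @mono_bound _ G dG c2 a' b' ab' dGt (fun t ht => h2 t (ltac:(move: ht => /andP[? ?]; apply/andP; split; lra))).
have P3 := @mono_bound _ G dG c1 b' 1 b'1 dGt (fun t ht => h1 t (ltac:(move: ht => /andP[? ?]; apply/andP; split; lra)) (ltac:(right; move: ht => /andP[? ?]; case: b'e => E; lra))).
have : (c1 - c2) * (b' - a') <= (c1 - c2) * (b - a) by apply: ler_wpM2l; lra.
nra.
Qed.

Lemma ar3 (R : realFieldType) (K a b s B : R) : 0 <= K -> s ^+ 2 = B ->
  (K <= (a - b) * s \/ K <= (b - a) * s) -> K ^+ 2 <= (a - b) ^+ 2 * B.
Proof.
move=> K0 <- h.
have -> : (a - b) ^+ 2 * s ^+ 2 = ((a - b) * s) ^+ 2 by rewrite exprMn.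
case: h => h.
  by rewrite ler_pXn2r // nnegrE // (le_trans K0 h).
have -> : ((a - b) * s) ^+ 2 = ((b - a) * s) ^+ 2 by rewrite -sqrrN; congr (_ ^+ 2); ring.
by rewrite ler_pXn2r // nnegrE // (le_trans K0 h).
Qed.

Lemma ar4 (R : realFieldType) (A P B t t0 : R) : t0 * B = - P -> P ^+ 2 <= A * B ->
  B * ((t0 - t) ^+ 2 * B) <= B * (A + 2 * t * P + t ^+ 2 * B).
Proof.
move=> e h; have eP : P = - (t0 * B) by rewrite e opprK.
rewrite eP in h *.
rewrite -subr_ge0.
have -> : B * (A + 2 * t * - (t0 * B) + t ^+ 2 * B) - B * ((t0 - t) ^+ 2 * B) = A * B - (- (t0 * B)) ^+ 2 by ring.
by rewrite subr_ge0.
Qed.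

Lemma ar5 (R : realFieldType) (m L K s B k D g : R) : 0 < m -> m <= L -> 0 <= K -> 0 < s ->
  s ^+ 2 = B -> k * s = K -> D * m = 8 * K * L -> D <= s ->
  m * B - (m * B - - L * B) * (k + k) <= g -> m / 2 * B <= g.
Proof.
move=> m0 mL K0 s0 <- ks Dm Ds h.
have e : (m * s ^+ 2 - - L * s ^+ 2) * (k + k) = 2 * (m + L) * K * s.
  by rewrite -ks; ring.
rewrite e in h.
have h1 : 4 * K * (m + L) <= 8 * K * L by nra.
have h2 : 8 * K * L <= s * m by rewrite -Dm ler_pM2r.
have h3 : 2 * (m + L) * K * s <= m / 2 * s ^+ 2.
  have : 4 * K * (m + L) * s <= s * m * s by rewrite ler_pM2r //; lra.
  have -> : m / 2 * s ^+ 2 = s * m * s / 2 by rewrite expr2; field.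
  lra.
lra.
Qed.

Lemma ar6a (R : realType) (t t0 k : R) : t <= t0 - k -> k <= t0 - t.
Proof. lra. Qed.
Lemma ar6b (R : realType) (t t0 k : R) : t0 + k <= t -> k <= t - t0.
Proof. lra. Qed.

Lemma ar_fin (R : realType) (K D M Z s : R) : K + D <= M -> M <= Z + s -> s < D -> K <= Z.
Proof. lra. Qed.

Lemma ar2 (R : realType) (m B g : R) : 0 < m -> 0 < B -> m * B * (1 - 0) <= g -> m / 2 * B <= g.
Proof. move=> m0 B0; have : 0 < m * B by rewrite mulr_gt0. lra. Qed.

Unset Implicit Arguments.

Theorem lemma9 (R : realType) (d : nat) (U : 'rV[R]_d -> R) (L m K : R) :
  C2 U ->
  grad U 0 = 0 ->
  (* sup_x ||D^2 U(x)|| <= L  (operator norm w.r.t. the Euclidean norm) *)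
  (forall x y z, enorm y = 1 -> enorm z = 1 -> `|hess U x y z| <= L) ->
  0 < m -> 0 <= K ->
  (forall x y, K <= enorm x -> enorm y = 1 -> m <= hess U x y y) ->
  forall x y : 'rV[R]_d,
    K + 8 * K * L / m <= Num.max (enorm x) (enorm y) ->
    (m / 2) * enorm (x - y) ^+ 2 <= dotv (grad U x - grad U y) (x - y).
Proof.
move=> C2U _ hL m0 K0 hm x y hmax.
have C2U' := C2U; case: C2U' => [d1 [d2 _]].
set v := x - y.
set B := dotv v v.
rewrite enorm_sq -/B.
have [B0|Bn] := eqVneq B 0.
  have := CS (grad U x - grad U y) v; rewrite -/B B0 mulr0.
  move=> h.
  have -> : dotv (grad U x - grad U y) v = 0.
    by apply/eqP; rewrite -sqrf_eq0 eq_le h sqr_ge0.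
  by rewrite mulr0.
rewrite dotvDl dotvNl -!derive_grad //.
set G := fun s : R => derive U (y + s *: v) v.
set dG := fun s : R => hess U (y + s *: v) v v.
have dGt : forall t : R, is_derive t (1:R) G (dG t).
  move=> t; apply: (@line_derive R d (fun w => derive U w v)).
  exact/diff_derivable/d2.
have G0 : G 0 = derive U y v by rewrite /G scale0r addr0.
have G1 : G 1 = derive U x v by rewrite /G scale1r /v addrC subrK.
rewrite -G0 -G1.
have Bg : 0 < B by rewrite lt_def Bn dotv_ge0.
set s := enorm v.
have s2 : s ^+ 2 = B by rewrite /s enorm_sq.
have sg : 0 < s.
  rewrite lt_def enorm_ge0 andbT; apply/eqP => s0; move: s2; rewrite s0 expr0n /= => B0'.
  by move: Bn; rewrite -B0' eqxx.
set u := s^-1 *: v.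
have u1 : enorm u = 1 by rewrite /u enormZ ger0_norm ?invr_ge0 ?enorm_ge0 // mulVf // gt_eqF.
have vu : v = s *: u by rewrite /u scalerA divff ?scale1r // gt_eqF.
have dGu : forall t, dG t = B * hess U (y + t *: v) u u.
  move=> t; rewrite /dG; set z := y + t *: v.
  have -> : hess U z v v = hess U z (s *: u) (s *: u) by rewrite -vu.
  by rewrite hess_scale // s2.
have Hlow : forall t, - L * B <= dG t.
  move=> t; rewrite dGu; have := hL (y + t *: v) u u u1 u1; rewrite ler_norml => /andP[h _].
  by rewrite mulrC ler_pM2l.
have Hhigh : forall t, K <= enorm (y + t *: v) -> m * B <= dG t.
  move=> t hK; rewrite dGu mulrC ler_pM2l //; exact: hm.
have L0 : 0 <= L by apply: le_trans (hL 0 u u u1 u1); exact: normr_ge0.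
set D := 8 * K * L / m.
have Dm : D * m = 8 * K * L by rewrite /D mulrVK // unitfE gt_eqF.
have D0 : 0 <= D by rewrite /D divr_ge0 // ?mulr_ge0 // ltW.
have mL : m <= L.
  have : K <= Num.max (enorm x) (enorm y) by apply: le_trans hmax; rewrite lerDl.
  rewrite le_max => /orP[] hK.
    have := hm x u hK u1; have := hL x u u u1 u1; rewrite ler_norml => /andP[_ h]; lra.
  have := hm y u hK u1; have := hL y u u u1 u1; rewrite ler_norml => /andP[_ h]; lra.
have [sD|sD] := leP D s.
  set P := dotv y v.
  have [t0 e1] : exists t0, t0 * B = - P by exists (- P / B); rewrite divfK // gt_eqF.
  set k := K / s.
  have ks : k * s = K by rewrite /k divfK // gt_eqF.
  have k0 : 0 <= k by rewrite /k divr_ge0 // ltW.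
  have Hout : forall t, (t <= t0 - k \/ t0 + k <= t) -> K <= enorm (y + t *: v).
    move=> t ht.
    have hw : K <= (t0 - t) * s \/ K <= (t - t0) * s.
      case: ht => h; [left|right]; rewrite -ks; apply: ler_wpM2r; try exact: ltW.
        exact: ar6a h.
      exact: ar6b h.
    have hK2 := ar3 K0 s2 hw.
    have key := ar4 t e1 (CS y v).
    rewrite -quad -/B in key.
    rewrite -ler_sqr ?nnegrE ?enorm_ge0 // enorm_sq.
    apply: (le_trans hK2); by rewrite -(ler_pM2l Bg).
  have LB : - L * B <= m * B by rewrite ler_pM2r //; apply: (le_trans _ (ltW m0)); rewrite oppr_le0.
  have kk : t0 - k <= t0 + k by rewrite lerD2l; apply: (le_trans _ k0); rewrite oppr_le0.
  have := three_pieces dGt (fun t _ h => Hhigh t (Hout t h)) (fun t _ => Hlow t) LB kk.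
  have -> : t0 + k - (t0 - k) = k + k by rewrite opprB addrC addrA subrK.
  exact: ar5 m0 mL K0 sg s2 ks Dm sD.
have Hin : forall t, 0 < t < 1 -> K <= enorm (y + t *: v).
  move=> t /andP[t0 t1].
  have ex : x = (y + t *: v) + (1 - t) *: v.
    by rewrite scalerBl scale1r addrACA subrr addr0 /v addrC subrK.
  have ey : y = (y + t *: v) + (- t) *: v by rewrite scaleNr addrK.
  have nx := enormD (y + t *: v) ((1 - t) *: v); rewrite -ex enormZ ger0_norm in nx; last lra.
  have ny := enormD (y + t *: v) ((- t) *: v); rewrite -ey enormZ normrN ger0_norm in ny; last lra.
  have : Num.max (enorm x) (enorm y) <= enorm (y + t *: v) + s.
    rewrite ge_max; apply/andP; split.
      by apply: (le_trans nx); rewrite lerD2l; apply: ler_piMl; [exact: ltW | rewrite gerBl ltW].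
    by apply: (le_trans ny); rewrite lerD2l; apply: ler_piMl; exact: ltW.
  move=> hh; exact: ar_fin hmax hh sD.
exact: ar2 m0 Bg (@mono_bound _ G dG (m * B) 0 1 ler01 dGt (fun t ht => Hhigh t (Hin t ht))).
Qed.
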